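(* Let $n\ge 2$ and let $\alpha,\beta$ be $n$-cycles in the symmetric group $S_{n+1}$. Then there is an integer $d$ with $1\le d\le n-1$ such that $\alpha\beta^d$ is not an $n$-cycle.
   Context: Permutations act on the right and $\alpha\beta$ means first $\alpha$, then $\beta$. *)

(* Defs.v *)
From mathcomp Require Import all_boot all_fingroup.
Set Implicit Arguments. Unset Strict Implicit. Unset Printing Implicit Defensive.

Definition is_cycle_of_length (T : finType) (k : nat) (s : {perm T}) : Prop :=
  exists x : T, #|porbit s x| = k /\ forall y, y \notin porbit s x -> s y = y.

(* Main.v *)
Require Import Defs.
From mathcomp Require Import all_boot all_fingroup.
From mathcomp Require Import zify.
Set Implicit Arguments. Unset Strict Implicit.

Lemma orb_inj (T : finType) (s : {perm T}) y i j :
  i < #|porbit s y| -> j < #|porbit s y| -> (s ^+ i)%g y = (s ^+ j)%g y -> i = j.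
Proof.
move=> hi hj; rewrite !permX => e.
have U := uniq_traject_porbit s y.
apply/eqP; rewrite -(nth_uniq y _ _ U) ?size_traject //.
by rewrite !nth_traject // e.
Qed.

Lemma orb_surj (T : finType) (s : {perm T}) y z :
  z \in porbit s y -> exists2 i, i < #|porbit s y| & z = (s ^+ i)%g y.
Proof.
rewrite porbit_traject => /trajectP [i hi ->]; exists i => //; by rewrite permX.
Qed.

Lemma fixX (T : finType) (s : {perm T}) q k : s q = q -> (s ^+ k)%g q = q.
Proof. by move=> h; rewrite permX; elim: k => //= k ->. Qed.

Lemma cyc n (s : 'S_(n.+1)) : is_cycle_of_length n s ->
  exists q, s q = q /\ (forall y, y != q -> porbit s y = [set~ q]).
Proof.
move=> [x [hc hf]].
have : #|~: porbit s x| == 1.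
  by apply/eqP; have := cardsC (porbit s x); rewrite hc card_ord; lia.
move/cards1P => [q hq].
have qn : q \notin porbit s x by rewrite -in_setC hq set11.
exists q; split; first exact: hf.
move=> y yq.
have yo : y \in porbit s x by rewrite -[y \in _]negbK -in_setC hq in_set1.
rewrite -hq setCK; apply/eqP; by rewrite eq_porbit_mem.
Qed.

Lemma cyc_card n (s : 'S_(n.+1)) q y : (forall y, y != q -> porbit s y = [set~ q]) ->
  y != q -> #|porbit s y| = n.
Proof. by move=> h yq; rewrite h // cardsC1 card_ord. Qed.

Lemma fixq n (s : 'S_(n.+1)) q y : 2 <= n -> (forall y, y != q -> porbit s y = [set~ q]) ->
  s y = y -> y = q.
Proof.
move=> hn h sy; apply/eqP; apply/negPn/negP => yq.
have c := cyc_card h yq.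
have := @orb_inj _ s y 1 0; rewrite c expg1 expg0 perm1 sy.
by move=> /(_ ltac:(lia) ltac:(lia) erefl).
Qed.

Lemma fix1 n (s : 'S_(n.+1)) : 2 <= n -> is_cycle_of_length n s ->
  #|[set x | s x == x]| = 1.
Proof.
move=> hn /cyc [q [sq h]].
apply/eqP/cards1P; exists q; apply/setP => y; rewrite !inE.
apply/eqP/eqP => [|->] //; exact: fixq.
Qed.

Lemma notcyc n (s : 'S_(n.+1)) : 2 <= n -> #|[set x | s x == x]| != 1 ->
  ~ is_cycle_of_length n s.
Proof. by move=> hn h /(fix1 hn) e; rewrite e in h. Qed.

Theorem lemma1 (n : nat) (hn : 2 <= n) (a b : 'S_(n.+1)) :
  is_cycle_of_length n a -> is_cycle_of_length n b ->
  exists d : nat, 1 <= d <= n - 1 /\ ~ is_cycle_of_length n (a * b ^+ d)%g.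
Proof.
move=> /cyc [p [ap ha]] /cyc [q [bq hb]].
have bnq : forall k y, y != q -> (b ^+ k)%g y != q.
  move=> k y yq; apply/negP => /eqP e.
  have : (b ^+ k)%g y \in porbit b y by apply: mem_porbit.
  by rewrite hb // e !inE eqxx.
have afix : forall y, a y = y -> y = p by move=> y; apply: fixq hn ha.
case: (eqVneq p q) => [epq | npq].
  subst q.
  have [x xp] : exists x : 'I_n.+1, x != p.
    case: (eqVneq p ord0) => [-> | h]; last by exists ord0; rewrite eq_sym.
    by exists ord_max; apply/negP => /eqP/(congr1 val) /=; lia.
  have axp : a x != p.
    apply/negP => /eqP e; move: xp; rewrite -ap in e.
    by rewrite (perm_inj e) eqxx.
  have axx : a x != x by apply/negP => /eqP /afix /eqP; rewrite (negPf xp).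
  have : x \in porbit b (a x) by rewrite hb // !inE.
  move=> /orb_surj [i hi ex].
  rewrite (cyc_card hb axp) in hi.
  exists i; split.
    case: i hi ex => [|i] hi ex; last by lia.
    by rewrite expg0 perm1 in ex; rewrite -ex eqxx in axx.
  apply: notcyc => //; apply/negP => /cards1P [z hz].
  have h1 : x \in [set x | (a * b ^+ i)%g x == x] by rewrite inE permM -ex.
  have h2 : p \in [set x | (a * b ^+ i)%g x == x] by rewrite inE permM ap fixX.
  move: h1 h2; rewrite hz !inE => /eqP e1 /eqP e2.
  by move: xp; rewrite e1 e2 eqxx.
case: (boolP [exists d : 'I_n, (0 < d) && (#|[set x | (a * b ^+ d)%g x == x]| != 1)]).
  move=> /existsP [d /andP [d0 hd]]; exists d; split; first by have := ltn_ord d; lia.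
  exact: notcyc.
rewrite negb_exists => /forallP hall.
have H1 : forall k, 0 < k < n -> #|[set x | (a * b ^+ k)%g x == x]| = 1.
  move=> k /andP [k0 kn]; have := hall (Ordinal kn); rewrite /= k0 /=.
  by move/negPn/eqP.
pose g (i : 'I_n.-1) := odflt q [pick x | (a * b ^+ i.+1)%g x == x].
have gfix : forall i : 'I_n.-1, (b ^+ i.+1)%g (a (g i)) = g i.
  move=> i; rewrite /g; case: pickP => [x /eqP | h] /=; first by rewrite permM.
  have : #|[set x | (a * b ^+ i.+1)%g x == x]| = 1 by apply: H1; have := ltn_ord i; lia.
  move/eqP/cards1P => [z hz].
  have : z \in [set x | (a * b ^+ i.+1)%g x == x] by rewrite hz set11.
  by rewrite inE h.
set r := (a^-1)%g q.
have ar : a r = q by rewrite /r permKV.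
have gq : forall i, g i != q.
  move=> i; apply/negP => /eqP e.
  have := gfix i; rewrite e.
  case: (eqVneq (a q) q) => [/afix e2 | aq].
    by move: npq; rewrite e2 eqxx.
  by move=> e3; have := bnq i.+1 _ aq; rewrite e3 eqxx.
have gaq : forall i, a (g i) != q.
  move=> i; apply/negP => /eqP e; have := gfix i; rewrite e fixX // => e2.
  by have := gq i; rewrite -e2 eqxx.
have pnq : p != q by [].
have porbp := cyc_card hb pnq.
have gp : forall i, g i != p.
  move=> i; apply/negP => /eqP e; have := gfix i; rewrite e ap => e2.
  have := @orb_inj _ b p i.+1 0; rewrite porbp expg0 perm1 => /(_ _ _ e2).
  by have := ltn_ord i; lia.
have gr : forall i, g i != r.
  by move=> i; apply/negP => /eqP e; have := gaq i; rewrite e ar eqxx.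
have ginj : injective g.
  move=> i j e.
  have e2 : (b ^+ i.+1)%g (a (g i)) = (b ^+ j.+1)%g (a (g i)).
    by rewrite gfix {2}e gfix.
  have c := cyc_card hb (gaq i).
  have := @orb_inj _ b (a (g i)) i.+1 j.+1; rewrite c => /(_ _ _ e2).
  have := ltn_ord i; have := ltn_ord j => ? ? h.
  apply: val_inj => /=; lia.
have sub : g @: setT \subset ~: [set p; q; r].
  apply/subsetP => _ /imsetP [i _ ->]; rewrite !inE.
  by rewrite (negPf (gp i)) (negPf (gq i)) (negPf (gr i)).
have := subset_leq_card sub; rewrite card_imset // cardsT card_ord.
have rq : r != q.
  apply/negP => /eqP e; move: ar; rewrite e => /afix e2; by rewrite e2 eqxx in pnq.
have rp : r != p.
  apply/negP => /eqP e; move: ar; rewrite e ap => e2; by rewrite e2 eqxx in pnq.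
have c3 : #|[set p; q; r]| = 3.
  rewrite setUC cardsU1 cards2 !inE (negPf pnq) (negPf rq) (negPf rp) /=.
  by [].
have := cardsC [set p; q; r]; rewrite c3 card_ord; lia.
Qed.
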